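(* The Linear aTAM is not intrinsically universal: there is no finite 1D tile set $U$ (and temperature $\tau'$) with computable $\mathcal{R},S$ such that every Linear aTAM system $\mathcal{T}$ is simulated, at some scale $m$ under $\mathcal{R}(\mathcal{T})$, by the Linear aTAM system $(U,S(\mathcal{T}),\tau')$.
   Context: 1D aTAM: a tile type has a west glue and an east glue, each a pair (finite string label, nonnegative integer strength); a tile set is finite. Assemblies are partial functions $\alpha:\mathbb{Z}\dashrightarrow T$ with nonempty interval domain; adjacent tiles interact if the east glue of the left equals the west glue of the right with positive strength; $\alpha$ is $\tau$-stable if every cut between consecutive tiles has strength $\ge\tau$. A system $\mathcal{T}=(T,\sigma,\tau)$ has finite $\tau$-stable seed $\sigma$; growth is by single $\tau$-stable tile additions (finite or infinite sequences, result = limit). The Linear aTAM additionally requires that a tile can be added at empty location $p$ only if there is a path in $\mathbb{Z}$ from $p$ to a point outside the minimal bounding interval of the current assembly avoiding its domain. $\mathcal{A}[\mathcal{T}]$ are producible assemblies, $\mathcal{A}_\Box[\mathcal{T}]$ the producible ones admitting no further tile. Simulation: an $m$-block over $S$ is a partial function $\{0,\dots,m-1\}\dashrightarrow S$; $\alpha^m_x$ is $i\mapsto\alpha(mx+i)$. A partial $R$ from $m$-blocks to $T$ is valid if $\alpha\sqsubseteq\beta$, $\alpha\in\mathrm{dom}R$ imply $R(\beta)=R(\alpha)$; $R^*(\alpha')$ is $x\mapsto R(\alpha'^m_x)$. $\alpha'$ maps cleanly if each nonempty block at $x$ has $x$ or $x\pm1$ in $\mathrm{dom}\,R^*(\alpha')$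 (or at most one nonempty block). $\mathcal{S}$ simulates $\mathcal{T}$ under $R$ if: (i) $R^*$ maps $\mathcal{A}[\mathcal{S}]$ onto $\mathcal{A}[\mathcal{T}]$ and $\mathcal{A}_\Box[\mathcal{S}]$ onto $\mathcal{A}_\Box[\mathcal{T}]$, all producible assemblies mapping cleanly; (ii) producible $\alpha'\to^\mathcal{S}\beta'$ implies $R^*(\alpha')\to^\mathcal{T}R^*(\beta')$; (iii) for every $\alpha\in\mathcal{A}[\mathcal{T}]$ there is $\Pi\subset\mathcal{A}[\mathcal{S}]$ with $R^*=\alpha$ on $\Pi$ such that for every producible $\beta$ with $\alpha\to^\mathcal{T}\beta$: each $\alpha'\in\Pi$ produces some $\beta'$ with $R^*(\beta')=\beta$, and whenever producible $\alpha''\to^\mathcal{S}\beta'$ with $R^*(\alpha'')=\alpha$, $R^*(\beta')=\beta$, some $\alpha'\in\Pi$ produces $\alpha''$. *)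

(* Defs.v *)
From HB Require Import structures.
From mathcomp Require Import all_boot all_order all_algebra.
Set Implicit Arguments. Unset Strict Implicit. Unset Printing Implicit Defensive.
Import Order.TTheory GRing.Theory Num.Theory.

(* a glue: (finite string label over the alphabet nat, nonnegative strength) *)
Notation glue := (seq nat * nat)%type.
Notation tile := (glue * glue)%type.
Definition west (t : tile) : glue := t.1.
Definition east (t : tile) : glue := t.2.
Notation tileset := (seq tile).
Notation assembly := (int -> option tile).
(* a finite seed with (nonempty, interval) domain, given by its leftmost
   position and the list of its tiles from left to right *)
Notation seedT := (int * seq tile)%type.
Notation system := (tileset * seedT * nat)%type.

Definition sys_tiles (s : system) : tileset := s.1.1.
Definition sys_seed (s : system) : seedT := s.1.2.
Definition sys_temp (s : system) : nat := s.2.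

Definition tile0 : tile := (([::], 0%N), ([::], 0%N)).

Definition seed_asm (sd : seedT) : assembly := fun x =>
  if ((sd.1 <= x) && (x < sd.1 + (size sd.2)%:Z))%R
  then Some (nth tile0 sd.2 `|(x - sd.1)%R|%N) else None.

Definition cut (t t' : tile) : nat := if east t == west t' then (west t').2 else 0%N.

Definition stable (tau : nat) (a : assembly) : Prop :=
  forall (x : int) (t t' : tile), a x = Some t -> a (x + 1)%R = Some t' ->
    (tau <= cut t t')%N.

Definition is_asm (T : tileset) (a : assembly) : Prop :=
  (exists x, a x <> None) /\
  (forall x y z : int, (x <= y)%R -> (y <= z)%R -> a x <> None -> a z <> None ->
      a y <> None) /\
  (forall x t, a x = Some t -> t \in T).

Definition outside_bbox (a : assembly) (q : int) : Prop :=
  (forall x, a x <> None -> (q < x)%R) \/ (forall x, a x <> None -> (x < q)%R).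

Definition adjZ (u v : int) : bool := (v == u + 1)%R || (u == v + 1)%R.

(* Linear aTAM restriction: a path in Z from p to a point outside the
   bounding interval of a, avoiding the domain of a *)
Definition linear_ok (a : assembly) (p : int) : Prop :=
  exists s : seq int, path adjZ p s /\
    (forall z, z \in p :: s -> a z = None) /\ outside_bbox a (last p s).

Definition add1 (T : tileset) (tau : nat) (a b : assembly) : Prop :=
  exists (p : int) (t : tile), t \in T /\ a p = None /\ linear_ok a p /\
    (forall x, b x = if x == p then Some t else a x) /\
    is_asm T b /\ stable tau b.

(* a ->^T b : b results from a by a finite or infinite sequence of single
   tile additions (finite sequences = eventually stuttering), b = limit *)
Definition produces (T : tileset) (tau : nat) (a b : assembly) : Prop :=
  exists f : nat -> assembly, f 0%N =1 a /\
    (forall i, f i.+1 =1 f i \/ add1 T tau (f i) (f i.+1)) /\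
    (forall x, exists i, forall j, (i <= j)%N -> f j x = b x).

Definition producible (s : system) (b : assembly) : Prop :=
  produces (sys_tiles s) (sys_temp s) (seed_asm (sys_seed s)) b.

Definition terminal (s : system) (b : assembly) : Prop :=
  producible s b /\ ~ (exists c, add1 (sys_tiles s) (sys_temp s) b c).

Definition valid_system (s : system) : Prop :=
  (0 < sys_temp s)%N /\ (0 < size (sys_seed s).2)%N /\
  all (fun t => t \in sys_tiles s) (sys_seed s).2 /\
  stable (sys_temp s) (seed_asm (sys_seed s)).

Notation block := (seq (option tile)).
(* a (finite) partial map from blocks to tiles: first matching entry *)
Notation table := (seq (block * tile)).
(* representation data: scale m and partial map R *)
Notation rep := (nat * table)%type.

Definition rep_lookup (tb : table) (b : block) : option tile :=
  if [seq e <- tb | e.1 == b] is e :: _ then Some e.2 else None.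

Definition blockAt (m : nat) (a : assembly) (x : int) : block :=
  mkseq (fun i => a (m%:Z * x + i%:Z)%R) m.

Definition Rstar (R : rep) (a : assembly) : assembly :=
  fun x => rep_lookup R.2 (blockAt R.1 a x).

Definition block_over (U : tileset) (b : block) : bool :=
  all (fun o => if o is Some t then t \in U else true) b.

Definition sub_block (b b' : block) : Prop :=
  forall i t, nth None b i = Some t -> nth None b' i = Some t.

Definition valid_rep (U : tileset) (R : rep) : Prop :=
  forall b b' : block, size b = R.1 -> size b' = R.1 ->
    block_over U b -> block_over U b' -> sub_block b b' ->
    rep_lookup R.2 b <> None -> rep_lookup R.2 b' = rep_lookup R.2 b.

Definition nonempty_block (b : block) : bool := has (fun o => o != None) b.

Definition maps_cleanly (R : rep) (a : assembly) : Prop :=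
  (forall x, nonempty_block (blockAt R.1 a x) ->
     Rstar R a x <> None \/ Rstar R a (x + 1)%R <> None \/
     Rstar R a (x - 1)%R <> None) \/
  (forall x y, nonempty_block (blockAt R.1 a x) ->
     nonempty_block (blockAt R.1 a y) -> x = y).

Definition simulates (Ssys Tsys : system) (R : rep) : Prop :=
  let PS := producible Ssys in
  let PT := producible Tsys in
  let prS := produces (sys_tiles Ssys) (sys_temp Ssys) in
  let prT := produces (sys_tiles Tsys) (sys_temp Tsys) in
  (0 < R.1)%N /\ valid_rep (sys_tiles Ssys) R /\
  (forall a', PS a' -> PT (Rstar R a')) /\
  (forall a, PT a -> exists a', PS a' /\ Rstar R a' =1 a) /\
  (forall a', terminal Ssys a' -> terminal Tsys (Rstar R a')) /\
  (forall a, terminal Tsys a -> exists a', terminal Ssys a' /\ Rstar R a' =1 a) /\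
  (forall a', PS a' -> maps_cleanly R a') /\
  (forall a' b', PS a' -> prS a' b' -> prT (Rstar R a') (Rstar R b')) /\
  (forall a, PT a -> exists Pi : assembly -> Prop,
     (forall a', Pi a' -> PS a' /\ Rstar R a' =1 a) /\
     (forall b, PT b -> prT a b ->
        (forall a', Pi a' -> exists b', prS a' b' /\ Rstar R b' =1 b) /\
        (forall a'' b', PS a'' -> prS a'' b' -> Rstar R a'' =1 a ->
           Rstar R b' =1 b -> exists a', Pi a' /\ prS a' a''))).

(* Computability: register (Minsky) machines on nat, countable types    *)
(* encoded via pickle                                                   *)

Inductive instr := INC of nat | DEC of nat & nat.

Definition upd (r : nat -> nat) (i v : nat) : nat -> nat :=
  fun j => if j == i then v else r j.

Definition rm_step (p : seq instr) (st : nat * (nat -> nat)) : nat * (nat -> nat) :=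
  let: (pc, r) := st in
  if (pc < size p)%N then
    match nth (INC 0) p pc with
    | INC i => (pc.+1, upd r i (r i).+1)
    | DEC i j => if r i == 0%N then (j, r) else (pc.+1, upd r i (r i).-1)
    end
  else st.

Definition rm_computes (p : seq instr) (n out : nat) : Prop :=
  exists k, let st := iter k (rm_step p) (0%N, upd (fun _ => 0%N) 0 n) in
    (size p <= st.1)%N /\ st.2 0%N = out.

Definition computable (A B : countType) (f : A -> B) : Prop :=
  exists p : seq instr, forall a, rm_computes p (pickle a) (pickle (f a)).

(* Main.v *)
Require Import Defs.
From HB Require Import structures.
From mathcomp Require Import all_boot all_order all_algebra zify.
From Stdlib Require Import Classical.
Set Implicit Arguments. Unset Strict Implicit. Unset Printing Implicit Defensive.
Import Order.TTheory GRing.Theory Num.Theory.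
Local Open Scope ring_scope.

Definition sub_asm (a b : assembly) := forall x t, a x = Some t -> b x = Some t.

Definition good (T : tileset) (tau : nat) (c : assembly) : Prop :=
  stable tau c /\ (forall x t, c x = Some t -> t \in T) /\
  (forall x y z : int, x <= y -> y <= z -> c x <> None -> c z <> None -> c y <> None).

Lemma add1_mono T tau a b : add1 T tau a b -> sub_asm a b.
Proof.
case=> p [t [_ [ap [_ [hb _]]]]] x u hx; rewrite hb.
case: eqP => // e; by rewrite e ap in hx.
Qed.

Lemma step_mono T tau (f : nat -> assembly) :
  (forall i, f i.+1 =1 f i \/ add1 T tau (f i) (f i.+1)) ->
  forall i j, (i <= j)%N -> sub_asm (f i) (f j).
Proof.
move=> hs i j /subnKC <-; elim: (j - i)%N => [|k ih]; first by rewrite addn0.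
rewrite addnS => x t /ih h; case: (hs (i + k)%N) => [e|/add1_mono]; first by rewrite e.
by apply.
Qed.

Lemma produces_mono T tau a b : produces T tau a b -> sub_asm a b.
Proof.
case=> f [f0 [hs hl]] x t hx.
case: (hl x) => i hi; rewrite -(hi i (leqnn i)).
apply: (step_mono hs (leq0n i)); by rewrite f0.
Qed.

Lemma produces_refl T tau a : produces T tau a a.
Proof.
exists (fun _ => a); split=> //; split; first by left.
by move=> x; exists 0%N.
Qed.

Lemma good_ext T tau a b : a =1 b -> good T tau a -> good T tau b.
Proof.
move=> e [hs [ht hi]]; split; last split.
- move=> x t t'; rewrite -!e; exact: hs.
- move=> x t; rewrite -e; exact: ht.
- move=> x y z h1 h2; rewrite -!e; exact: hi.
Qed.

Lemma produces_good T tau a b : produces T tau a b -> good T tau a -> good T tau b.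
Proof.
case=> f [f0 [hs hl]] ga.
have gf : forall i, good T tau (f i).
  elim=> [|i ih]; first by apply: good_ext ga => x; rewrite f0.
  case: (hs i) => [e|]; first by apply: good_ext ih => x; rewrite e.
  case=> p [t [_ [_ [_ [_ [[_ [hi ht]] hst]]]]]]; by split.
have lim2 : forall x y, exists j, f j x = b x /\ f j y = b y.
  move=> x y; case: (hl x) => i hi; case: (hl y) => i' hi'.
  exists (maxn i i'); split; [apply: hi | apply: hi']; lia.
split; last split.
- move=> x t t' h1 h2; case: (lim2 x (x+1)) => j [e1 e2].
  case: (gf j) => hs' _; apply: (hs' x t t'); by rewrite ?e1 ?e2.
- move=> x t h; case: (hl x) => j hj; case: (gf j) => _ [ht _].
  apply: (ht x); by rewrite hj.
- move=> x y z h1 h2 hx hz; case: (lim2 x z) => j [e1 e2].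
  case: (hl y) => j' hj'.
  have m1 := step_mono hs (leq_maxl j j'). have m2 := step_mono hs (leq_maxr j j').
  case: (gf (maxn j j')) => _ [_ hi].
  rewrite -(hj' (maxn j j')) ?leq_maxr //.
  have hx' : f (maxn j j') x <> None.
    move: hx; rewrite -e1; case E: (f j x) => [u|] // _; by rewrite (m1 _ _ E).
  have hz' : f (maxn j j') z <> None.
    move: hz; rewrite -e2; case E: (f j z) => [u|] // _; by rewrite (m1 _ _ E).
  exact: (hi x y z h1 h2 hx' hz').
Qed.

Lemma seed_asm_dom (sd : seedT) x : (seed_asm sd x != None) = (sd.1 <= x) && (x < sd.1 + (size sd.2)%:Z).
Proof. rewrite /seed_asm; by case: ifP. Qed.

Lemma seed_good T tau (sd : seedT) : stable tau (seed_asm sd) -> all (fun t => t \in T) sd.2 ->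
  good T tau (seed_asm sd).
Proof.
move=> hs ha; split=> //; split.
- move=> x t; rewrite /seed_asm; case: ifP => // /andP [h h'] [<-].
  move/allP: ha; apply; apply: mem_nth. move: h h'; case: sd {hs} => l s /= h h'. rewrite -ltz_nat; rewrite gez0_abs; lia.
- move=> x y z h1 h2 /eqP hx /eqP hz; apply/eqP.
  move: hx hz; rewrite !seed_asm_dom => /andP [? ?] /andP [? ?]; apply/andP; split; lia.
Qed.

Definition tln (n k : nat) : tile := (([:: k], nat_of_bool (k != 0)%N), ([:: k.+1], nat_of_bool (k != n))).
Definition Tn (n : nat) : tileset := [seq tln n i | i <- iota 0 n.+1].
Definition sysT (n : nat) : system := (Tn n, (0, [:: tln n 0]), 1%N).

Lemma mem_Tn n t : t \in Tn n -> exists k, (k <= n)%N /\ t = tln n k.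
Proof. case/mapP => k; rewrite mem_iota /= => hk ->; exists k; split=> //; lia. Qed.

Lemma tln_in n k : (k <= n)%N -> tln n k \in Tn n.
Proof. move=> hk; apply: map_f; rewrite mem_iota; lia. Qed.

Lemma cut_tln n a b : (0 < cut (tln n a) (tln n b))%N -> b = a.+1.
Proof. rewrite /cut /tln /east /west /=; case: eqP => // [[]] //. Qed.

Lemma cut_tln1 n a : (a < n)%N -> (1 <= cut (tln n a) (tln n a.+1))%N.
Proof.
move=> h; rewrite /cut /tln /east /west /=.
have -> : (a != n) = true by apply/eqP; lia.
by rewrite eqxx.
Qed.

Lemma seedT_val n x : seed_asm (0, [:: tln n 0]) x = if x == 0 then Some (tln n 0) else None.
Proof.
rewrite /seed_asm /=; case: eqP => [->|h] //; case: ifP => // /andP [h1 h2]; exfalso; lia.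
Qed.

Lemma valid_sysT n : valid_system (sysT n).
Proof.
split=> //; split=> //; split; first by rewrite /= tln_in.
move=> x t t'; rewrite /sys_seed /= !seedT_val; case: eqP => // ->; case: eqP => //.
Qed.

Lemma inv_Tn n b : producible (sysT n) b ->
  forall x t, b x = Some t -> exists k, x = k%:Z /\ (k <= n)%N /\ t = tln n k.
Proof.
move=> hp; case: (hp) => f [f0 [hs hl]].
have f00 : forall i, f i 0 = Some (tln n 0).
  move=> i; apply: (step_mono hs (leq0n i)); by rewrite f0 /sys_seed /= seedT_val.
have inv : forall i x t, f i x = Some t -> exists k, x = k%:Z /\ (k <= n)%N /\ t = tln n k.
  elim=> [|i ih] x t.
    rewrite f0 /sys_seed /= seedT_val; case: eqP => // -> [<-]; by exists 0%N.
  case: (hs i) => [e|]; first by rewrite e; apply: ih.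
  case=> p [u [hu [ap [_ [hb [[_ [hi _]] hst]]]]]].
  rewrite hb; case: eqP => [-> [<-]|_]; last exact: ih.
  case/mem_Tn: hu => y [hy eu]; subst u.
  have bp : f i.+1 p = Some (tln n y) by rewrite hb eqxx.
  have p0 : p != 0 by apply/eqP => e; rewrite e f00 in ap.
  have b0 : f i.+1 0 <> None by rewrite hb; case: eqP => //; rewrite f00.
  have [pgt|plt] : (0 < p) \/ (p < 0) by lia.
  + have : f i.+1 (p - 1) <> None.
      apply: (hi 0 (p-1) p); rewrite ?bp //; lia.
    rewrite hb; have -> : (p - 1 == p) = false by apply/eqP; lia.
    case E: (f i (p-1)) => [v|] // _.
    case: (ih _ _ E) => k [ek [hk ev]]; subst v.
    have : (1 <= cut (tln n k) (tln n y))%N.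
      apply: (hst (p-1)); rewrite ?hb ?eqxx.
      * have -> : (p - 1 == p) = false by apply/eqP; lia. exact: E.
      * by rewrite subrK eqxx.
    move/cut_tln => ey; exists y; split=> //; lia.
  + have : f i.+1 (p + 1) <> None.
      apply: (hi p (p+1) 0); rewrite ?bp //; lia.
    rewrite hb; have -> : (p + 1 == p) = false by apply/eqP; lia.
    case E: (f i (p+1)) => [v|] // _.
    case: (ih _ _ E) => k [ek [hk ev]]; subst v.
    have : (1 <= cut (tln n y) (tln n k))%N.
      apply: (hst p); first exact: bp.
      rewrite hb; have -> : (p + 1 == p) = false by apply/eqP; lia. exact: E.
    move/cut_tln => ey; exfalso; lia.
move=> x t hx; case: (hl x) => i hi; apply: (inv i); by rewrite hi.
Qed.

Definition alpha (n : nat) : assembly := fun x =>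
  if (0 <= x) && (x <= n%:Z) then Some (tln n `|x|%N) else None.

Lemma alpha_prod n : producible (sysT n) (alpha n).
Proof.
pose f (i : nat) : assembly := fun x =>
  if (0 <= x) && (x <= (minn i n)%:Z) then Some (tln n `|x|%N) else None.
exists f; split; last split.
- move=> x; rewrite /f /sys_seed /= seedT_val; case: eqP => [->|h] //.
  case: ifP => // /andP [h1 h2]; exfalso; lia.
- move=> i; case: (leqP n i) => hi.
    left=> x; rewrite /f; have -> : minn i.+1 n = minn i n by lia. done.
  right; exists (i.+1)%:Z, (tln n i.+1); split; first by apply: tln_in.
  split; first by rewrite /f; case: ifP => // /andP [h1 h2]; lia.
  split.
    exists [::]; split=> //; split; first by move=> z; rewrite inE => /eqP ->; rewrite /f; case: ifP => // /andP [h1 h2]; lia.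
    right=> x /=; rewrite /f; case: ifP => // /andP [h1 h2] _; lia.
  split.
    move=> x; rewrite /f; case: eqP => [->|h].
      rewrite ifT //; apply/andP; split; lia.
    have e : ((0 <= x) && (x <= (minn i.+1 n)%:Z)) = ((0 <= x) && (x <= (minn i n)%:Z)).
      apply/idP/idP; move/andP=> [? ?]; apply/andP; split; lia.
    by rewrite e.
  split; first split.
  + exists 0; by rewrite /f /=.
  + split.
      move=> x y z h1 h2; rewrite /f; case: ifP => [/andP [? ?] _|_ []//]; case: ifP => [/andP [? ?] _|_ []//].
      rewrite ifT //; apply/andP; split; lia.
    move=> x t; rewrite /f; case: ifP => // /andP [? ?] [<-]; apply: tln_in; lia.
  + move=> x t t'; rewrite /f /sys_temp /=; case: ifP => // /andP [? ?] [<-]; case: ifP => // /andP [? ?] [<-].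
    have -> : absz (x + 1) = (absz x).+1 by lia.
    apply: cut_tln1; lia.
- move=> x; exists n => j hj; rewrite /f /alpha; have -> : minn j n = n by lia. done.
Qed.

Lemma blockAt_sub m a b x : sub_asm a b -> sub_block (blockAt m a x) (blockAt m b x).
Proof.
move=> h i t; case: (ltnP i m) => hi; last by rewrite nth_default // size_mkseq.
rewrite /blockAt !nth_mkseq //; exact: h.
Qed.

Lemma blockAt_over (U : tileset) m a x : (forall y t, a y = Some t -> t \in U) -> block_over U (blockAt m a x).
Proof.
move=> h; apply/allP => o /mapP [i _ ->]; case E: (a _) => [t|] //; exact: h E.
Qed.

Lemma mkseq_eq_in T (f g : nat -> T) m : (forall i, (i < m)%N -> f i = g i) -> mkseq f m = mkseq g m.
Proof. move=> h; rewrite /mkseq; apply/eq_in_map => i; rewrite mem_iota => hi; apply: h; lia. Qed.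

Lemma nonempty_at m (a : assembly) x i : (i < m)%N -> a (m%:Z * x + i%:Z) <> None -> nonempty_block (blockAt m a x).
Proof.
move=> hi ha; apply/(has_nthP None); exists i; first by rewrite size_mkseq.
by rewrite nth_mkseq //; apply/eqP.
Qed.

Ltac nle := apply/negbTE; rewrite -ltNge; lia.

Lemma seed_dom (sd : seedT) x : (0 < size sd.2)%N ->
  (seed_asm sd x <> None) <-> (sd.1 <= x) /\ (x <= sd.1 + (size sd.2)%:Z - 1).
Proof.
move=> hs; split.
- move/eqP; rewrite seed_asm_dom => /andP [? ?]; split; lia.
- move=> [? ?]; apply/eqP; rewrite seed_asm_dom; apply/andP; split; lia.
Qed.

Lemma pump (U : tileset) tau (sd : seedT) (a : assembly) (r : int) :
  r = sd.1 + (size sd.2)%:Z - 1 -> (0 < size sd.2)%N -> good U tau (seed_asm sd) ->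
  good U tau a -> sub_asm (seed_asm sd) a ->
  (forall i : nat, (1 <= i <= (size U).+1)%N -> a (r + i%:Z) <> None) ->
  exists a2, produces U tau (seed_asm sd) a2 /\ forall x, r < x -> a2 x <> None.
Proof.
move=> er hs [sst [sti sint]] [ast [ati aint]] hsub hfill.
set seed := seed_asm sd.
pose w (i : nat) : tile := odflt tile0 (a (r + i%:Z)).
have hw : forall i, (1 <= i <= (size U).+1)%N -> a (r + i%:Z) = Some (w i).
  move=> i hi; rewrite /w; case E: (a _) => [u|] //; by have := hfill i hi; rewrite E.
have wU : forall i, (1 <= i <= (size U).+1)%N -> w i \in U.
  move=> i hi; exact: ati (hw i hi).
pose L := [seq w i.+1 | i <- iota 0 (size U).+1].
have nuL : ~~ uniq L.
  apply/negP => uL; have := uniq_leq_size uL.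
  have sub : {subset L <= U}.
    move=> t /mapP [i]; rewrite mem_iota => hi ->; apply: wU; lia.
  move/(_ U sub); by rewrite size_map size_iota ltnn.
case/(uniqPn tile0): nuL => i1 [i2 [h12 hB2 heq]].
rewrite /L size_map size_iota in hB2.
have hB1 : (i1 < (size U).+1)%N by apply: ltn_trans hB2.
rewrite /L !(nth_map 0%N) ?size_iota // ?nth_iota // ?add0n in heq.
set j := i1.+1 in heq; set k := i2.+1 in heq.
pose nxt (p : nat) : nat := if p.+1 == k then j else p.+1.
pose per (t : nat) : nat := iter t nxt 1%N.
have per_rng : forall t, (1 <= per t < k)%N.
  elim=> [|t ih]; first by rewrite /per /=; lia.
  rewrite /per iterS -/(per t) /nxt; case: eqP => h; lia.
have w_nxt : forall p, w (nxt p) = w p.+1.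
  move=> p; rewrite /nxt; case: eqP => [->|] //.
have stab : forall p, (1 <= p < k)%N -> (tau <= cut (w p) (w p.+1))%N.
  move=> p hp; apply: (ast (r + p%:Z)); first by apply: hw; lia.
  have -> : r + p%:Z + 1 = r + (p.+1)%:Z by lia.
  apply: hw; lia.
have seedN : forall x, r < x -> seed x = None.
  move=> x hx; case E: (seed x) => [u|] //; have : seed x <> None by rewrite E.
  move/(seed_dom x hs) => [_ ?]; lia.
have seedD : forall x, (seed x <> None) <-> (sd.1 <= x) /\ (x <= r).
  move=> x; rewrite er; exact: seed_dom.
pose tl (x : int) : option tile := Some (w (per (absz (x - r)%R).-1)).
pose g (t : nat) : assembly := fun x =>
  if x <= r then seed x else if x <= r + t%:Z then tl x else None.
pose a2 : assembly := fun x => if x <= r then seed x else tl x.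
have gD : forall t x, (g t x <> None) <-> (sd.1 <= x) /\ (x <= r + t%:Z).
  move=> t x; rewrite /g; case: ifP => h1.
    rewrite seedD; split; move=> [? ?]; split; lia.
  case: ifP => h2; split=> //; try (move=> [? ?]; lia).
  move=> _; split; lia.
have gU : forall t x u, g t x = Some u -> u \in U.
  move=> t x u; rewrite /g; case: ifP => h1; first exact: sti.
  case: ifP => // h2 [<-]; apply: wU; have := per_rng (absz (x - r)%R).-1; lia.
exists a2; split; last first.
  move=> x hx; by rewrite /a2 ifF //; lia.
exists g; split; last split.
- move=> x; rewrite /g; case: ifP => // h1; rewrite ifF; last nle.
  by rewrite seedN //; lia.
- move=> t; right; exists (r + t.+1%:Z), (w (per t)); split.
    apply: wU; have := per_rng t; lia.
  split; first by rewrite /g ifF ?ifF //; lia.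
  split.
    exists [::]; split=> //; split.
      move=> z; rewrite inE => /eqP ->; rewrite /g ifF ?ifF //; lia.
    right=> x /= /gD [? ?]; lia.
  split.
    move=> x; rewrite /g; case: eqP => [->|hx].
      rewrite ifF; last nle. rewrite ifT; last lia.
      rewrite /tl; do 3 f_equal; lia.
    case: ifP => // h1; case: ifP => h2; case: ifP => h3 //; exfalso; lia.
  split; first split.
  + exists sd.1; apply/gD; split; lia.
  + split; last exact: gU.
    move=> x y z h1 h2 /gD [? ?] /gD [? ?]; apply/gD; split; lia.
  + move=> x u u'; rewrite /g.
    have [c1|[c2|c3]] : (x + 1 <= r) \/ (x = r \/ r < x) by lia.
    * rewrite ifT; last lia. rewrite ifT //. exact: sst.
    * subst x; rewrite lexx ifF; last lia. rewrite ifT; last lia.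
      move=> hx [<-].
      have ar : a r = Some u by apply: hsub.
      apply: (ast r) => //. rewrite /tl.
      have -> : (absz (r + 1 - r)%R).-1 = 0%N by lia.
      rewrite /per /=. apply: hw; lia.
    * have e1 : (x <= r) = false by nle. have e2 : (x + 1 <= r) = false by nle. rewrite e1 e2.
      case: ifP => // h3 [<-]; case: ifP => // h4 [<-].
      have -> : (absz (x + 1 - r)%R).-1 = ((absz (x - r)%R).-1).+1 by lia.
      rewrite /per iterS -/(per _) w_nxt; apply: stab; apply: per_rng.
- move=> x; exists (absz (x - r)) => jj hj; rewrite /g /a2.
  case: ifP => // h1; rewrite ifT //; lia.
Qed.

Theorem mainTheorem8 :
  ~ (exists (U : tileset) (tau' : nat) (R : system -> rep) (S : system -> seedT),
       computable R /\ computable S /\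
       forall T : system, valid_system T ->
         valid_system (U, S T, tau') /\ simulates (U, S T, tau') T (R T)).
Proof.
move=> [U [tau' [R [S [_ [_ hall]]]]]].
set N := size U. set n := N.+2.
have [vS sim] := hall (sysT n) (valid_sysT n).
move: vS sim; set sd := S (sysT n); set R' := R (sysT n).
move=> [_ [hs [hall' sst]]] [m0 [vrep [i1 [i2 [_ [_ [clean _]]]]]]].
rewrite /sys_seed /sys_tiles /sys_temp /= in hs hall' sst.
set m := R'.1 in m0.
set seed := seed_asm sd.
have gseed : good U tau' seed by apply: seed_good.
set l := sd.1. set r := l + (size sd.2)%:Z - 1.
have seedD : forall x, (seed x <> None) <-> (l <= x) /\ (x <= r) by move=> x; exact: seed_dom.
have prodS : forall a, producible (U, sd, tau') a -> good U tau' a /\ sub_asm seed a.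
  move=> a pa; split; [exact: produces_good pa gseed | exact: produces_mono pa].
have seedP : producible (U, sd, tau') seed by apply: produces_refl.
have sTP : producible (sysT n) (seed_asm (0, [:: tln n 0])) by apply: produces_refl.
have hR0 : forall x t, Rstar R' seed x = Some t -> x = 0.
  move=> x t hx; case: (i2 _ sTP) => a0 [pa0 ea0].
  have [[_ [ti0 _]] sub0] := prodS a0 pa0.
  have e := vrep (blockAt m seed x) (blockAt m a0 x) (size_mkseq _ _) (size_mkseq _ _)
    (@blockAt_over U m seed x (let: conj _ (conj h _) := gseed in h))
    (@blockAt_over U m a0 x ti0) (@blockAt_sub m seed a0 x sub0).
  have hx' : rep_lookup R'.2 (blockAt m seed x) = Some t := hx.
  have : Rstar R' a0 x = Some t by rewrite /Rstar e hx'.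
  rewrite ea0 /sys_seed /= seedT_val; by case: eqP.
have hR00 : Rstar R' seed 0 <> None.
  have := produces_mono (i1 _ seedP) (x:=0) (t:=tln n 0).
  by rewrite /sys_seed /= seedT_val eqxx => ->.
have lm : l < m%:Z.
  case: (ltP l m%:Z) => // hml; exfalso.
  have e : blockAt m seed (-1) = blockAt m seed 0.
    apply: mkseq_eq_in => i hi.
    have n1 : seed (m%:Z * -1 + i%:Z) = None.
      case E: (seed _) => [u|] //; have : seed (m%:Z * -1 + i%:Z) <> None by rewrite E.
      move/seedD => [? ?]; lia.
    have n2 : seed (m%:Z * 0 + i%:Z) = None.
      case E: (seed _) => [u|] //; have : seed (m%:Z * 0 + i%:Z) <> None by rewrite E.
      move/seedD => [? ?]; lia.
    by rewrite n1 n2.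
  move: hR00; rewrite /Rstar -e; case E: (rep_lookup _ _) => [u|] // _.
  have := hR0 (-1) u; rewrite /Rstar E => /(_ erefl); lia.
case: (i2 _ (alpha_prod n)) => a [pa ea].
have [[ast [ati aint]] asub] := prodS a pa.
have wit : forall x : nat, (1 <= x <= n)%N -> exists q, m%:Z * x%:Z <= q < m%:Z * x%:Z + m%:Z /\ a q <> None /\ r < q.
  move=> x hx; apply: NNPP => hno.
  have e : blockAt m a x = blockAt m seed x.
    apply: mkseq_eq_in => i hi.
    case E: (seed _) => [u|]; first by apply: asub.
    case Ea: (a _) => [v|] //; exfalso; apply: hno.
    exists (m%:Z * x%:Z + i%:Z); split; first (apply/andP; split; lia).
    split; first by rewrite Ea.
    have : ~ (l <= m%:Z * x%:Z + i%:Z /\ m%:Z * x%:Z + i%:Z <= r) by move/seedD; rewrite E.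
    nia.
  have : Rstar R' a x <> None by rewrite ea /alpha ifT //; apply/andP; split; lia.
  rewrite /Rstar e; case E: (rep_lookup _ _) => [u|] // _.
  have := hR0 x u; rewrite /Rstar E => /(_ erefl); lia.
case: (wit 1%N) => [|q1 [/andP [q1a q1b] [_ q1r]]]; first by lia.
case: (wit n) => [|qn [/andP [qna qnb] [qnN qnr]]]; first by lia.
have ar : a r <> None.
  have : seed r <> None by apply/seedD; rewrite /r; split; lia.
  case E: (seed r) => [u|] // _; by rewrite (asub _ _ E).
have hfill : forall i : nat, (1 <= i <= (size U).+1)%N -> a (r + i%:Z) <> None.
  move=> i hi; apply: (aint r _ qn) => //; try lia.
  have : (m * N >= N)%N by rewrite leq_pmull.
  nia.
have [a2 [pa2 fa2]] := pump (erefl r) hs gseed (conj ast (conj ati aint)) asub hfill.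
have Ta2 := i1 _ pa2.
have bnd : forall y, Rstar R' a2 y <> None -> y <= n%:Z.
  move=> y; case E: (Rstar R' a2 y) => [u|] // _.
  have [k [-> [hk _]]] := inv_Tn Ta2 E; lia.
set X : int := (n.+2)%:Z.
have ne : forall y, X <= y -> nonempty_block (blockAt m a2 y).
  move=> y hy; apply: (nonempty_at (i := 0%N)) => //; apply: fa2; nia.
case: (clean a2 pa2) => [h|h].
- have := h X (ne X (lexx X)).
  case=> [/bnd|[/bnd|/bnd]]; rewrite /X; lia.
- have := h X (X + 1) (ne X (lexx X)) (ne (X + 1) _); lia.
Qed.
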